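(* Let $D\ge3$, $3\le k\le D$, and let $\mathbf a:\mathbb R^D\to\mathcal H$ define a CMF dictionary with kernel $\varphi(\|\cdot-\cdot\|_p^p)$, where $\varphi$ is moreover right-differentiable at $0$ (finite right derivative). Then there exists $x_0>0$ such that for every $\Delta>0$ with $\Delta^p<x_0$ and every points $\theta^\star_1,\dots,\theta^\star_k\in\mathbb R^D$ satisfying $\|\theta^\star_\ell-\theta^\star_{\ell'}\|_p^p=2\Delta^p$ for $\ell\ne\ell'$ and $\|\theta^\star_\ell\|_p^p=\Delta^p$ for all $\ell$, the vector $\mathbf y=\sum_{\ell=1}^k\mathbf a(\theta^\star_\ell)$ satisfies $|\langle\mathbf a(\mathbf 0),\mathbf y\rangle|>|\langle\mathbf a(\theta^\star_\ell),\mathbf y\rangle|$ for every $\ell$; hence OMP with input $\mathbf y$ selects a parameter not in $\{\theta^\star_\ell\}_{\ell=1}^k$ at the first iteration. In the special case $\varphi(t)=e^{-\lambda t}$ ($\lambda>0$) this holds whenever $0<\Delta^p<\lambda^{-1}\log(k-1)$.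
   Context: CMF: $\varphi:[0,\infty)\to\mathbb R$ infinitely differentiable on $(0,\infty)$, right-continuous at $0$, $(-1)^n\varphi^{(n)}(x)\ge0$ for $x>0$, $n\ge0$. A CMF dictionary in dimension $D$ is $\mathbf a:\mathbb R^D\to\mathcal H$ ($\mathcal H$ real Hilbert) with $\langle\mathbf a(\theta),\mathbf a(\theta')\rangle=\varphi(\|\theta-\theta'\|_p^p)$, $\varphi$ a CMF, $\varphi(0)=1$, $\lim_{x\to\infty}\varphi(x)=0$, $0<p\le1$, $\|\theta\|_p^p=\sum_d|\theta[d]|^p$. The first OMP iteration with input $\mathbf y$ selects some element of $\arg\max_\theta|\langle\mathbf a(\theta),\mathbf y\rangle|$. *)

(* Defs.v *)
From Stdlib Require Import Reals Lra Lia.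
Open Scope R_scope.

Record InnerSpace := {
  vec :> Type;
  vadd : vec -> vec -> vec;
  vzero : vec;
  vopp : vec -> vec;
  vscal : R -> vec -> vec;
  inner : vec -> vec -> R;
  vadd_assoc : forall u v w, vadd u (vadd v w) = vadd (vadd u v) w;
  vadd_comm : forall u v, vadd u v = vadd v u;
  vadd_0 : forall u, vadd u vzero = u;
  vadd_opp : forall u, vadd u (vopp u) = vzero;
  vscal_1 : forall u, vscal 1 u = u;
  vscal_assoc : forall a b u, vscal a (vscal b u) = vscal (a * b) u;
  vscal_distr_v : forall a u v, vscal a (vadd u v) = vadd (vscal a u) (vscal a v);
  vscal_distr_s : forall a b u, vscal (a + b) u = vadd (vscal a u) (vscal b u);
  inner_sym : forall u v, inner u v = inner v u;
  inner_add_r : forall u v w, inner u (vadd v w) = inner u v + inner u w;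
  inner_scal_r : forall a u v, inner u (vscal a v) = a * inner u v;
  inner_pos : forall u, 0 <= inner u u;
  inner_def : forall u, inner u u = 0 -> u = vzero
}.

Fixpoint vsum (H : InnerSpace) (n : nat) (f : nat -> vec H) : vec H :=
  match n with
  | O => vzero H
  | S m => vadd H (vsum H m f) (f m)
  end.

(** |x|^p with the convention |0|^p = 0 (p > 0). *)
Definition abspow (x p : R) : R :=
  if Req_EM_T x 0 then 0 else Rpower (Rabs x) p.

(** Points of R^D are modelled as nat -> R; only coordinates 0..D-1 matter.
    ||theta||_p^p = sum_{d<D} |theta d|^p. *)
Fixpoint pnormp (D : nat) (p : R) (theta : nat -> R) : R :=
  match D with
  | O => 0
  | S d => pnormp d p theta + abspow (theta d) p
  end.

Definition vdiff (theta theta' : nat -> R) : nat -> R := fun d => theta d - theta' d.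
Definition origin : nat -> R := fun _ => 0.

Definition CMF (phi : R -> R) : Prop :=
  (exists f : nat -> R -> R,
      (forall x, 0 < x -> f O x = phi x) /\
      (forall n x, 0 < x -> derivable_pt_lim (f n) x (f (S n) x)) /\
      (forall n x, 0 < x -> 0 <= (-1) ^ n * f n x)) /\
  (forall eps, 0 < eps -> exists delta, 0 < delta /\
      forall x, 0 <= x < delta -> Rabs (phi x - phi 0) < eps).

Definition tends_to_0_at_infty (phi : R -> R) : Prop :=
  forall eps, 0 < eps -> exists M, forall x, M < x -> Rabs (phi x) < eps.

Definition right_differentiable_at_0 (phi : R -> R) : Prop :=
  exists L, forall eps, 0 < eps -> exists delta, 0 < delta /\
    forall h, 0 < h < delta -> Rabs ((phi h - phi 0) / h - L) < eps.

Definition CMF_dictionary (D : nat) (H : InnerSpace) (a : (nat -> R) -> vec H)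
  (phi : R -> R) (p : R) : Prop :=
  CMF phi /\ phi 0 = 1 /\ tends_to_0_at_infty phi /\ 0 < p <= 1 /\
  forall theta theta', inner H (a theta) (a theta') = phi (pnormp D p (vdiff theta theta')).

(** Conclusion for given Delta and atoms theta*_0..theta*_{k-1} (= ts 0 .. ts (k-1)). *)
Definition first_OMP_step_fails (D k : nat) (H : InnerSpace) (a : (nat -> R) -> vec H)
  (p Delta : R) : Prop :=
  forall ts : nat -> nat -> R,
    (forall l l', (l < k)%nat -> (l' < k)%nat -> l <> l' ->
        pnormp D p (vdiff (ts l) (ts l')) = 2 * Rpower Delta p) ->
    (forall l, (l < k)%nat -> pnormp D p (ts l) = Rpower Delta p) ->
    let y := vsum H k (fun l => a (ts l)) in
    (forall l, (l < k)%nat ->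
        Rabs (inner H (a origin) y) > Rabs (inner H (a (ts l)) y)) /\
    (forall theta,
        (forall theta', Rabs (inner H (a theta') y) <= Rabs (inner H (a theta) y)) ->
        forall l, (l < k)%nat -> ~ (forall d, (d < D)%nat -> theta d = ts l d)).

(* Main.v *)
Require Import Defs.
From Stdlib Require Import Reals Lra Lia Psatz.
Open Scope R_scope.

Lemma abspow_opp x p : abspow (-x) p = abspow x p.
Proof.
  unfold abspow; destruct (Req_EM_T (-x) 0), (Req_EM_T x 0); try lra; try reflexivity.
  rewrite Rabs_Ropp; reflexivity.
Qed.

Lemma pnormp_ext D p f g : (forall d, (d < D)%nat -> f d = g d) -> pnormp D p f = pnormp D p g.
Proof.
  induction D; intros Hfg; simpl; auto.
  rewrite IHD by (intros; apply Hfg; lia). rewrite Hfg by lia. reflexivity.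
Qed.

Lemma pnormp_origin D p th : pnormp D p (vdiff origin th) = pnormp D p th.
Proof.
  induction D; simpl; auto. rewrite IHD. f_equal. unfold vdiff, origin.
  replace (0 - th D) with (- th D) by ring. apply abspow_opp.
Qed.

Lemma pnormp_self D p th : pnormp D p (vdiff th th) = 0.
Proof.
  induction D; simpl; auto. rewrite IHD. unfold vdiff, abspow.
  replace (th D - th D) with 0 by ring. destruct (Req_EM_T 0 0); lra.
Qed.

Fixpoint rsum (n : nat) (g : nat -> R) : R :=
  match n with O => 0 | S m => rsum m g + g m end.

Lemma inner_zero H u : inner H u (vzero H) = 0.
Proof.
  pose proof (inner_add_r H u (vzero H) (vzero H)) as E. rewrite vadd_0 in E. lra.
Qed.

Lemma inner_vsum H u n f : inner H u (vsum H n f) = rsum n (fun l => inner H u (f l)).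
Proof.
  induction n; simpl. - apply inner_zero. - rewrite inner_add_r, IHn; reflexivity.
Qed.

Lemma rsum_ext n f g : (forall j, (j < n)%nat -> f j = g j) -> rsum n f = rsum n g.
Proof.
  induction n; intros Hfg; simpl; auto. rewrite IHn by (intros; apply Hfg; lia).
  rewrite Hfg by lia. reflexivity.
Qed.

Lemma rsum_const n f c : (forall j, (j < n)%nat -> f j = c) -> rsum n f = INR n * c.
Proof.
  induction n; intros Hf; cbn [rsum]; [simpl; ring|]. rewrite IHn by (intros; apply Hf; lia).
  rewrite Hf by lia. rewrite S_INR. ring.
Qed.

Lemma rsum_one n l B g : (l < n)%nat -> (forall j, (j < n)%nat -> j <> l -> g j = B) ->
  g l = 1 -> rsum n g = 1 + (INR n - 1) * B.
Proof.
  induction n; intros Hl Hg Hgl; [lia|]. cbn [rsum].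
  destruct (Nat.eq_dec l n).
  - subst. rewrite (rsum_const n g B) by (intros; apply Hg; lia). rewrite Hgl, S_INR. ring.
  - rewrite IHn by (auto; lia). rewrite Hg by lia. rewrite S_INR. ring.
Qed.

Lemma core D k H a phi p Delta :
  (forall th th', inner H (a th) (a th') = phi (pnormp D p (vdiff th th'))) ->
  phi 0 = 1 -> 0 <= phi (2 * Rpower Delta p) ->
  INR k * phi (Rpower Delta p) > 1 + (INR k - 1) * phi (2 * Rpower Delta p) ->
  first_OMP_step_fails D k H a p Delta.
Proof.
  intros Hin H0 Hpos Hineq ts Hd Hn y.
  assert (E0 : inner H (a origin) y = INR k * phi (Rpower Delta p)).
  { unfold y. rewrite inner_vsum. apply rsum_const. intros j Hj. cbv beta.
    rewrite Hin, pnormp_origin, Hn; auto. }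
  assert (El : forall l, (l < k)%nat ->
     inner H (a (ts l)) y = 1 + (INR k - 1) * phi (2 * Rpower Delta p)).
  { intros l Hl. unfold y. rewrite inner_vsum. apply rsum_one with l; auto.
    - intros j Hj Hjl. cbv beta. rewrite Hin, Hd; auto.
    - cbv beta. rewrite Hin, pnormp_self; auto. }
  split.
  - intros l Hl. rewrite E0, El by auto.
    assert (1 <= INR k) by (apply (le_INR 1); lia).
    assert (0 <= (INR k - 1) * phi (2 * Rpower Delta p)) by (apply Rmult_le_pos; lra).
    rewrite !Rabs_right; lra.
  - intros th Hmax l Hl Hag.
    assert (E : inner H (a th) y = inner H (a (ts l)) y).
    { unfold y; rewrite !inner_vsum; apply rsum_ext; intros j Hj; rewrite !Hin; f_equal;
      apply pnormp_ext; intros d Hdd; unfold vdiff; rewrite Hag; auto. }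
    specialize (Hmax origin). rewrite E, E0, El in Hmax by auto.
    assert (1 <= INR k) by (apply (le_INR 1); lia).
    assert (0 <= (INR k - 1) * phi (2 * Rpower Delta p)) by (apply Rmult_le_pos; lra).
    rewrite !Rabs_right in Hmax; lra.
Qed.

Lemma Rpower_pos x y : 0 < Rpower x y.
Proof. unfold Rpower; apply exp_pos. Qed.

Theorem mainTheorem16 :
  forall (D k : nat) (H : InnerSpace) (a : (nat -> R) -> vec H) (phi : R -> R) (p : R),
    (3 <= D)%nat -> (3 <= k)%nat -> (k <= D)%nat ->
    CMF_dictionary D H a phi p ->
    right_differentiable_at_0 phi ->
    (exists x0, 0 < x0 /\
       forall Delta, 0 < Delta -> Rpower Delta p < x0 ->
         first_OMP_step_fails D k H a p Delta) /\
    (forall lam, 0 < lam -> (forall x, 0 <= x -> phi x = exp (- lam * x)) ->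
       forall Delta, 0 < Delta -> Rpower Delta p < ln (INR k - 1) / lam ->
         first_OMP_step_fails D k H a p Delta).
Proof.
  intros D k H a phi p HD3 Hk3 HkD Hdict Hrd.
  destruct Hdict as [[[f [Hf0 [Hfd Hfs]]] Hcont] [Hphi0 [Htend [Hp Hin]]]].
  assert (HK : 3 <= INR k).
  { pose proof (le_INR 3 k Hk3) as X. simpl in X. lra. }
  split.
  - destruct Hrd as [L HL].
    destruct (Htend (1/2)) as [M HM]; [lra|].
    set (s := Rmax M 0 + 1).
    assert (Hs0 : 0 < s) by (unfold s; pose proof (Rmax_r M 0); lra).
    assert (Hs : phi s < 1/2).
    { assert (M < s) by (unfold s; pose proof (Rmax_l M 0); lra).
      specialize (HM s H0). apply Rabs_def2 in HM. lra. }
    destruct (Hcont (1/2)) as [d0 [Hd0 Hc]]; [lra|].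
    set (e := Rmin (d0/2) (s/2)).
    assert (He0 : 0 < e) by (unfold e; apply Rmin_pos; lra).
    assert (Hes : e < s) by (unfold e; pose proof (Rmin_r (d0/2) (s/2)); lra).
    assert (He : phi e > 1/2).
    { assert (e < d0) by (unfold e; pose proof (Rmin_l (d0/2) (s/2)); lra).
      specialize (Hc e ltac:(lra)). apply Rabs_def2 in Hc. lra. }
    assert (Hmono : forall x y, 0 < x -> x < y -> f 1%nat x <= f 1%nat y).
    { intros x y Hx Hxy.
      destruct (MVT_cor2 (f 1%nat) (f 2%nat) x y Hxy) as [xi [Exi Hxi]].
      { intros c Hc'. apply Hfd. lra. }
      pose proof (Hfs 2%nat xi ltac:(lra)) as F2.
      replace ((-1)^2) with 1 in F2 by ring.
      assert (0 <= f 2%nat xi * (y - x)) by (apply Rmult_le_pos; lra). lra. }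
    destruct (MVT_cor2 (f 0%nat) (f 1%nat) e s Hes) as [c [Ec Hc2]].
    { intros c Hc'. apply Hfd. lra. }
    rewrite !Hf0 in Ec by lra.
    set (m := f 1%nat c) in *.
    assert (Hm : m < 0).
    { destruct (Rlt_or_le m 0) as [X|X]; auto.
      assert (0 <= m * (s - e)) by (apply Rmult_le_pos; lra). lra. }
    assert (Hbound : forall h, 0 < h -> h <= c -> phi h - 1 <= m * h).
    { intros h Hh Hhc. apply Rnot_lt_le; intro Hgt.
      set (g := phi h - 1 - m * h).
      assert (Hg : 0 < g) by (unfold g; lra).
      destruct (Hcont (g/3)) as [d1 [Hd1 Hc1]]; [lra|].
      set (e' := Rmin (h/2) (Rmin (d1/2) (g/(3*(1-m))))).
      assert (Hq : 0 < g/(3*(1-m))) by (apply Rdiv_lt_0_compat; lra).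
      assert (He'0 : 0 < e') by (unfold e'; apply Rmin_pos; [lra| apply Rmin_pos; lra]).
      assert (He'1 : e' <= h/2) by (unfold e'; apply Rmin_l).
      assert (He'2 : e' <= d1/2) by (unfold e'; eapply Rle_trans; [apply Rmin_r|apply Rmin_l]).
      assert (He'3 : e' <= g/(3*(1-m))) by (unfold e'; eapply Rle_trans; [apply Rmin_r|apply Rmin_r]).
      assert (Hlt : e' < h) by lra.
      destruct (MVT_cor2 (f 0%nat) (f 1%nat) e' h Hlt) as [xi [Exi Hxi]].
      { intros c' Hc'. apply Hfd. lra. }
      rewrite !Hf0 in Exi by lra.
      assert (Hfx : f 1%nat xi <= m) by (apply Hmono; lra).
      assert (H1 : phi h - phi e' <= m * (h - e')).
      { rewrite Exi. apply Rmult_le_compat_r; lra. }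
      assert (H2 : (1 - m) * e' <= g/3).
      { apply Rmult_le_compat_l with (r := 1 - m) in He'3; [|lra].
        replace ((1 - m) * (g / (3 * (1 - m)))) with (g/3) in He'3 by (field; lra). exact He'3. }
      specialize (Hc1 e' ltac:(lra)). rewrite Hphi0 in Hc1. apply Rabs_def2 in Hc1.
      unfold g in *. nra. }
    assert (HL0 : L < 0).
    { destruct (HL (-m/2)) as [d2 [Hd2 Hd2']]; [lra|].
      set (h := Rmin (d2/2) c).
      assert (Hh0 : 0 < h) by (unfold h; apply Rmin_pos; lra).
      assert (Hh1 : h < d2) by (unfold h; pose proof (Rmin_l (d2/2) c); lra).
      assert (Hh2 : h <= c) by (unfold h; apply Rmin_r).
      specialize (Hd2' h ltac:(lra)). apply Rabs_def2 in Hd2'.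
      pose proof (Hbound h Hh0 Hh2) as B.
      assert ((phi h - phi 0) / h <= m).
      { rewrite Hphi0. apply Rmult_le_reg_r with h; auto.
        replace ((phi h - 1) / h * h) with (phi h - 1) by (field; lra). lra. }
      lra. }
    set (K := INR k) in *.
    set (eps := (2 - K) * L / (2 * (3 * K - 2))).
    assert (Heps : 0 < eps).
    { unfold eps. apply Rdiv_lt_0_compat; [nra|lra]. }
    destruct (HL eps Heps) as [d [Hd Hd']].
    exists (d/2). split; [lra|].
    intros Delta HDel Ht.
    pose proof (Rpower_pos Delta p) as Ht0.
    set (t := Rpower Delta p) in *.
    apply (core D k H a phi p Delta); auto; fold t.
    + rewrite <- Hf0 by lra. pose proof (Hfs 0%nat (2*t) ltac:(lra)) as F. simpl in F. lra.
    + pose proof (Hd' t ltac:(lra)) as A1. pose proof (Hd' (2*t) ltac:(lra)) as A2.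
      rewrite Hphi0 in A1, A2. apply Rabs_def2 in A1. apply Rabs_def2 in A2.
      assert (B1 : phi t - 1 > (L - eps) * t).
      { replace (phi t - 1) with ((phi t - 1)/t * t) by (field; lra).
        apply Rmult_lt_compat_r; lra. }
      assert (B2 : phi (2*t) - 1 < (L + eps) * (2*t)).
      { replace (phi (2*t) - 1) with ((phi (2*t) - 1)/(2*t) * (2*t)) by (field; lra).
        apply Rmult_lt_compat_r; lra. }
      assert (C1 : K * (phi t - 1) > K * ((L - eps) * t)) by (apply Rmult_lt_compat_l; lra).
      assert (C2 : (K - 1) * (phi (2*t) - 1) < (K - 1) * ((L + eps) * (2*t)))
        by (apply Rmult_lt_compat_l; lra).
      assert (C3 : (3*K - 2) * eps = (2 - K) * L / 2) by (unfold eps; field; lra).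
      assert (C4 : t * ((3*K - 2) * eps) = t * ((2 - K) * L / 2)) by (rewrite C3; auto).
      assert (C5 : 0 < t * ((2 - K) * L / 2)).
      { apply Rmult_lt_0_compat; auto. nra. }
      fold K. lra.
  - intros lam Hlam Hphi Delta HDel Ht.
    pose proof (Rpower_pos Delta p) as Ht0.
    set (t := Rpower Delta p) in *.
    apply (core D k H a phi p Delta); auto; fold t.
    + rewrite Hphi by lra. left; apply exp_pos.
    + rewrite !Hphi by lra.
      replace (- lam * (2 * t)) with (- lam * t + - lam * t) by ring. rewrite exp_plus.
      set (u := exp (- lam * t)).
      assert (Hu1 : u < 1).
      { unfold u. rewrite <- exp_0. apply exp_increasing. nra. }
      assert (Hlt : lam * t < ln (INR k - 1)).
      { apply Rmult_lt_compat_l with (r := lam) in Ht; auto.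
        replace (lam * (ln (INR k - 1) / lam)) with (ln (INR k - 1)) in Ht by (field; lra).
        exact Ht. }
      assert (Hu2 : / (INR k - 1) < u).
      { unfold u. rewrite <- (exp_ln (INR k - 1)) by lra. rewrite <- exp_Ropp.
        apply exp_increasing. lra. }
      assert (Hu3 : 1 < (INR k - 1) * u).
      { apply Rmult_lt_compat_l with (r := INR k - 1) in Hu2; [|lra].
        rewrite Rinv_r in Hu2 by lra. exact Hu2. }
      assert (0 < ((INR k - 1) * u - 1) * (1 - u)) by (apply Rmult_lt_0_compat; lra).
      nra.
Qed.
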